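(* Let $A,B$ be finite-dimensional $K$-subspaces of $L$ with $K\subset A\cap B$. Suppose there exist $K$-subspaces $\overline{A},\overline{B}\subset L$ such that $$A=K\oplus\overline{A},\quad B=K\oplus\overline{B},\quad K\cap\big(\overline{A}+\overline{B}+\langle\overline{A}\,\overline{B}\rangle\big)=\{0\}.$$ Then $\dim_K\langle AB\rangle\geq\dim_KA+\dim_KB-1$.
   Context: $K$ is a commutative field and $L$ is a (possibly noncommutative) division ring containing $K$ in its center. For $S\subset L$, $\langle S\rangle$ denotes the $K$-subspace of $L$ spanned by $S$. For subsets $S_1,S_2$ of $L$, $S_1S_2=\{s_1s_2\mid s_1\in S_1,s_2\in S_2\}$ (product set). *)

(* Defs.v *)
From HB Require Import structures.
From mathcomp Require Import all_boot all_order all_algebra.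
Set Implicit Arguments. Unset Strict Implicit. Unset Printing Implicit Defensive.
Import GRing.Theory.
Local Open Scope ring_scope.

Section Defs.
Variables (K : fieldType) (L : unitAlgType K).

Definition kspan (S : L -> Prop) : L -> Prop :=
  fun v => exists (s : seq L) (c : seq K),
    (forall i, (i < size s)%N -> S (nth 0 s i)) /\ size c = size s /\
    v = \sum_(i < size s) c`_i *: s`_i.

Definition is_subspace (S : L -> Prop) : Prop :=
  S 0 /\ forall (a : K) u v, S u -> S v -> S (a *: u + v).

Definition lin_indep (s : seq L) : Prop :=
  forall c : seq K, size c = size s ->
    \sum_(i < size s) c`_i *: s`_i = 0 -> forall i, (i < size s)%N -> c`_i = 0.

Definition has_dim (S : L -> Prop) (n : nat) : Prop :=
  exists s : seq L, size s = n /\ lin_indep s /\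
    forall x, S x <-> kspan (fun y => y \in s) x.

Definition prodset (S1 S2 : L -> Prop) : L -> Prop :=
  fun x => exists s1 s2, S1 s1 /\ S2 s2 /\ x = s1 * s2.

Definition sum3 (S1 S2 S3 : L -> Prop) : L -> Prop :=
  fun x => exists x1 x2 x3, S1 x1 /\ S2 x2 /\ S3 x3 /\ x = x1 + x2 + x3.

Definition dsum_K (A Abar : L -> Prop) : Prop :=
  (forall x, A x <-> exists (k : K) y, Abar y /\ x = k%:A + y) /\
  (forall k : K, Abar (k%:A) -> k%:A = 0 :> L).

End Defs.

(* Main.v *)
Require Import Defs.
From HB Require Import structures.
From mathcomp Require Import all_boot all_order all_algebra.
From Stdlib Require Import Classical ClassicalEpsilon Lia.
Import GRing.Theory.
Local Open Scope ring_scope.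
Set Implicit Arguments. Unset Strict Implicit.
Ltac nlia := repeat match goal with H : is_true (_ <= _)%N |- _ => move/leP: H => H end;
  try apply/leP;
  repeat match goal with H : context [addn _ _] |- _ => rewrite -plusE in H
   | H : context [subn _ _] |- _ => rewrite -minusE in H
   | H : context [muln _ _] |- _ => rewrite -multE in H
   | |- context [addn _ _] => rewrite -plusE | |- context [subn _ _] => rewrite -minusE
   | |- context [muln _ _] => rewrite -multE end; lia.

Section Lin.
Variables (K : fieldType) (L : unitAlgType K).
Implicit Types (X Y : L -> Prop) (s t : seq L).

Definition cmb s (c : nat -> K) : L := \sum_(0 <= i < size s) c i *: s`_i.
Definition spn s (v : L) : Prop := exists c, v = cmb s c.
Definition indep s : Prop :=
  forall c, cmb s c = 0 -> forall i, (i < size s)%N -> c i = 0.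
Definition hasd X n := exists s, size s = n /\ indep s /\ forall x, X x <-> spn s x.

Lemma sub0 X : is_subspace X -> X 0. Proof. by case. Qed.
Lemma subD X u v : is_subspace X -> X u -> X v -> X (u + v).
Proof. by case=> _ H Hu Hv; move: (H 1 u v Hu Hv); rewrite scale1r. Qed.
Lemma subZ X a u : is_subspace X -> X u -> X (a *: u).
Proof. case=> H0 H Hu; by move: (H a u 0 Hu H0); rewrite addr0. Qed.
Lemma subN X u : is_subspace X -> X u -> X (- u).
Proof. move=> h hu; rewrite -scaleN1r; exact: subZ. Qed.
Lemma subB X u v : is_subspace X -> X u -> X v -> X (u - v).
Proof. move=> h hu hv; apply: subD => //; exact: subN. Qed.
Lemma subsum X (I : Type) (r : seq I) (P : pred I) (F : I -> L) :
  is_subspace X -> (forall i, P i -> X (F i)) -> X (\sum_(i <- r | P i) F i).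
Proof. move=> h hF; elim/big_rec: _ => [|i x hi hx]; [exact: sub0 | apply: subD => //; exact: hF]. Qed.

Lemma cmb_eq s c d : (forall i, (i < size s)%N -> c i = d i) -> cmb s c = cmb s d.
Proof. move=> h; apply: eq_big_nat => i /andP[_ hi]; by rewrite h. Qed.

Lemma cmb_cat s1 s2 c :
  cmb (s1 ++ s2) c = cmb s1 c + cmb s2 (fun i => c (size s1 + i)%N).
Proof.
rewrite /cmb size_cat (@big_cat_nat _ _ _ (size s1)) //= ?leq_addr //.
congr (_ + _).
  by apply: eq_big_nat => i /andP[_ hi]; rewrite nth_cat hi.
rewrite -{1}(add0n (size s1)) big_addn addKn.
apply: eq_big_nat => i _; by rewrite nth_cat ltnNge leq_addl /= addnK addnC.
Qed.

Lemma cmbD s c d : cmb s (fun i => c i + d i) = cmb s c + cmb s d.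
Proof. rewrite /cmb -big_split; apply: eq_bigr => i _; by rewrite scalerDl. Qed.
Lemma cmbZ s a c : cmb s (fun i => a * c i) = a *: cmb s c.
Proof. rewrite /cmb scaler_sumr; apply: eq_bigr => i _; by rewrite scalerA. Qed.
Lemma cmb0 s : cmb s (fun _ => 0) = 0.
Proof. rewrite /cmb big1 // => i _; by rewrite scale0r. Qed.
Lemma cmbN s c : cmb s (fun i => - c i) = - cmb s c.
Proof. rewrite -scaleN1r -cmbZ; apply: cmb_eq => i _; by rewrite mulN1r. Qed.

Lemma spn_sub s : is_subspace (spn s).
Proof.
split; first by exists (fun _ => 0); rewrite cmb0.
move=> a u v [c ->] [d ->]; exists (fun i => a * c i + d i); by rewrite cmbD cmbZ.
Qed.

Lemma spn_nth s i : (i < size s)%N -> spn s s`_i.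
Proof.
move=> hi; exists (fun j => if j == i then 1 else 0).
rewrite /cmb (bigD1_seq i) ?mem_index_iota ?iota_uniq //= eqxx scale1r big1 ?addr0 //.
by move=> j /negbTE ->; rewrite scale0r.
Qed.

Lemma spn_min s X : is_subspace X -> (forall i, (i < size s)%N -> X s`_i) ->
  forall v, spn s v -> X v.
Proof.
move=> hX hs v [c ->]; rewrite /cmb big_seq; apply: subsum => // i.
rewrite mem_index_iota => /andP[_ hi]; apply: subZ => //; exact: hs.
Qed.

Lemma kspan_min (P X : L -> Prop) v :
  is_subspace X -> (forall y, P y -> X y) -> kspan P v -> X v.
Proof.
move=> hX hP [s [c [hs [hc ->]]]]; apply: subsum => // i _; apply: subZ => //.
exact: hP (hs _ (ltn_ord i)).
Qed.

Lemma kspan_in (P : L -> Prop) y : P y -> kspan P y.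
Proof.
move=> hy; exists [:: y], [:: 1]; split; first by case.
by split => //; rewrite big_ord1 scale1r.
Qed.

Lemma kspanE (P : L -> Prop) v :
  kspan P v <-> exists s, (forall i, (i < size s)%N -> P s`_i) /\ spn s v.
Proof.
split.
- move=> [s [c [hs [hc ->]]]]; exists s; split => //; exists (nth 0 c).
  by rewrite /cmb big_mkord.
- move=> [s [hs [c ->]]]; exists s, (mkseq c (size s)); split => //.
  split; first by rewrite size_mkseq.
  rewrite /cmb big_mkord; apply: eq_bigr => i _; by rewrite nth_mkseq.
Qed.

Lemma kspan_sub (P : L -> Prop) : is_subspace (kspan P).
Proof.
split.
  apply/kspanE; exists [::]; split => //; exists (fun _ => 0); by rewrite cmb0.
move=> a u v /kspanE [s1 [h1 [c1 ->]]] /kspanE [s2 [h2 [c2 ->]]]; apply/kspanE.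
exists (s1 ++ s2); split.
  move=> i; rewrite size_cat nth_cat; case: ifP => hi; first by move=> _; exact: h1.
  move=> h; apply: h2; rewrite -(ltn_add2l (size s1)) subnKC // leqNgt hi //.
exists (fun i => if (i < size s1)%N then a * c1 i else c2 (i - size s1)%N).
rewrite cmb_cat -cmbZ; congr (_ + _); apply: cmb_eq => i hi.
  by rewrite hi.
by rewrite ltnNge leq_addr /= addKn.
Qed.

Lemma spn_kspan s v : spn s v <-> kspan (fun y => y \in s) v.
Proof.
split.
  move=> hv; apply/kspanE; exists s; split => // i hi; exact: mem_nth.
move=> hv; apply: (@kspan_min _ (spn s) _ (spn_sub s) _ hv) => y hy.
rewrite -(nth_index 0 hy); apply: spn_nth; by rewrite index_mem.
Qed.

Lemma indepE s : lin_indep s <-> indep s.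
Proof.
split.
- move=> h c hc i hi; have := h (mkseq c (size s)); rewrite size_mkseq => /(_ erefl).
  have -> : \sum_(j < size s) (mkseq c (size s))`_j *: s`_j = cmb s c.
    by rewrite /cmb big_mkord; apply: eq_bigr => j _; rewrite nth_mkseq.
  by move=> /(_ hc i hi); rewrite nth_mkseq.
- move=> h c hc hs i hi; apply: (h (nth 0 c)) => //; by rewrite /cmb big_mkord.
Qed.

Lemma has_dimE X n : has_dim X n <-> hasd X n.
Proof.
split; move=> [s [h1 [h2 h3]]]; exists s; split => //.
  split; first by apply/indepE.
  by move=> x; rewrite h3 spn_kspan.
split; first by apply/indepE.
by move=> x; rewrite h3 spn_kspan.
Qed.

Lemma cmb1 y c : cmb [:: y] c = c 0%N *: y.
Proof. by rewrite /cmb big_nat1. Qed.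

Lemma spn_mem s y : y \in s -> spn s y.
Proof. move=> hy; rewrite -(nth_index 0 hy); apply: spn_nth; by rewrite index_mem. Qed.

Lemma indep_cat s1 s2 : indep s1 -> indep s2 ->
  (forall v, spn s1 v -> spn s2 v -> v = 0) -> indep (s1 ++ s2).
Proof.
move=> h1 h2 h12 c; rewrite cmb_cat => hc.
have e : cmb s1 c = - cmb s2 (fun i => c (size s1 + i)%N) by apply/eqP; rewrite -addr_eq0 hc.
have z1 : cmb s1 c = 0.
  apply: h12; first by exists c.
  rewrite e; apply: subN; [exact: spn_sub | by eexists].
have z2 : cmb s2 (fun i => c (size s1 + i)%N) = 0 by move: hc; rewrite z1 add0r.
move=> i; rewrite size_cat => hi.
case: (ltnP i (size s1)) => hi1; first exact: h1 z1 i hi1.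
have := h2 _ z2 (i - size s1)%N; rewrite subnKC //; apply.
by rewrite -(ltn_add2l (size s1)) subnKC.
Qed.

Lemma indep_catl s1 s2 : indep (s1 ++ s2) -> indep s1.
Proof.
move=> h c hc i hi.
have := h (fun j => if (j < size s1)%N then c j else 0).
rewrite cmb_cat (@cmb_eq s1 _ c); last by move=> j ->.
rewrite (@cmb_eq s2 _ (fun _ => 0)); last by move=> j _; rewrite ltnNge leq_addr.
rewrite cmb0 hc addr0 => /(_ erefl i).
rewrite size_cat ltn_addr // => /(_ erefl) /=.
by rewrite hi.
Qed.

Lemma indep_catr s1 s2 : indep (s1 ++ s2) -> indep s2.
Proof.
move=> h c hc i hi.
have := h (fun j => if (j < size s1)%N then 0 else c (j - size s1)%N).
rewrite cmb_cat (@cmb_eq s1 _ (fun _ => 0)); last by move=> j ->.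
rewrite (@cmb_eq s2 _ c); last by move=> j _; rewrite ltnNge leq_addr /= addKn.
rewrite cmb0 hc addr0 => /(_ erefl (size s1 + i)%N).
rewrite size_cat ltn_add2l => /(_ hi) /=.
by rewrite ltnNge leq_addr /= addKn.
Qed.

Lemma indep_disj s1 s2 : indep (s1 ++ s2) -> forall v, spn s1 v -> spn s2 v -> v = 0.
Proof.
move=> h v [c1 e1] [c2 e2].
have := h (fun j => if (j < size s1)%N then c1 j else - c2 (j - size s1)%N).
rewrite cmb_cat (@cmb_eq s1 _ c1); last by move=> j ->.
rewrite (@cmb_eq s2 _ (fun j => - c2 j)); last by move=> j _; rewrite ltnNge leq_addr /= addKn.
rewrite cmbN -e1 -e2 subrr => /(_ erefl) hz.
rewrite e1 -(cmb0 s1); apply: cmb_eq => j hj.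
by have := hz j; rewrite hj size_cat ltn_addr // => ->.
Qed.

Lemma indep1 y : y != 0 -> indep [:: y].
Proof.
move=> hy c; rewrite cmb1 => /eqP; rewrite scaler_eq0 (negbTE hy) orbF => /eqP h.
by case=> // _.
Qed.

Lemma indep_rcons s y : indep s -> ~ spn s y -> indep (s ++ [:: y]).
Proof.
move=> hs hy; apply: indep_cat => //.
  apply: indep1; apply/eqP => y0; apply: hy; rewrite y0; exact: sub0 (spn_sub s).
move=> v hv [c e]; rewrite cmb1 in e.
case: (eqVneq (c 0%N) 0) => hc; first by rewrite e hc scale0r.
exfalso; apply: hy.
have -> : y = (c 0%N)^-1 *: v by rewrite e scalerA mulVf // scale1r.
apply: subZ => //; exact: spn_sub.
Qed.

Lemma steinitz s t : indep t -> (forall j, (j < size t)%N -> spn s t`_j) ->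
  (size t <= size s)%N.
Proof.
move=> ht hts; rewrite leqNgt; apply/negP => hlt.
pose n := size t; pose m := size s.
have hc : forall j : 'I_n, {c : nat -> K | t`_j = cmb s c}.
  move=> j; apply: constructive_indefinite_description; exact: hts (ltn_ord j).
pose M : 'M[K]_(n, m) := \matrix_(j, i) sval (hc j) i.
have hr : (0 < \rank (kermx M))%N.
  by rewrite mxrank_ker subn_gt0 (leq_ltn_trans (rank_leq_col M)).
have [k hk] : exists k, row k (kermx M) != 0.
  apply: NNPP => hn.
  have : kermx M = 0.
    apply/row_matrixP => k; rewrite row0; apply/eqP; apply: NNPP => hk.
    by apply: hn; exists k; apply/negP.
  by move=> h0; move: hr; rewrite h0 mxrank0.
pose r := row k (kermx M).
have hrM : r *m M = 0 by rewrite /r -row_mul mulmx_ker row0.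
pose c := fun j : nat => if (insub j : option 'I_n) is Some i then r 0 i else 0.
have hct : cmb t c = 0.
  have -> : cmb t c = \sum_(j < n) \sum_(i < m) (r 0 j * M j i) *: s`_i.
    rewrite /cmb big_mkord; apply: eq_bigr => j _.
    rewrite /c valK (svalP (hc j)) /cmb big_mkord scaler_sumr.
    by apply: eq_bigr => i _; rewrite scalerA /M mxE.
  rewrite exchange_big /= big1 // => i _.
  rewrite -scaler_suml.
  have -> : \sum_(j < n) r 0 j * M j i = (r *m M) 0 i by rewrite mxE.
  by rewrite hrM mxE scale0r.
move/negP: hk; apply; apply/eqP/rowP => j.
have := ht c hct j (ltn_ord j); rewrite /c valK /r => ->; by rewrite mxE.
Qed.

Lemma allX_cat X s1 s2 : (forall i, (i < size s1)%N -> X s1`_i) ->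
  (forall i, (i < size s2)%N -> X s2`_i) -> forall i, (i < size (s1 ++ s2))%N -> X (s1 ++ s2)`_i.
Proof.
move=> h1 h2 i; rewrite size_cat nth_cat; case: ifP => hi1 hi; first exact: h1.
apply: h2; by rewrite -(ltn_add2l (size s1)) subnKC // leqNgt hi1.
Qed.

Lemma extend_aux s X t : is_subspace X -> (forall y, X y -> spn s y) ->
  (forall i, (i < size t)%N -> X t`_i) ->
  forall k t', (size s - size (t ++ t') <= k)%N -> indep (t ++ t') ->
  (forall i, (i < size t')%N -> X t'`_i) ->
  exists t'', indep (t ++ t'') /\ (forall i, (i < size t'')%N -> X t''`_i) /\
     (forall y, X y <-> spn (t ++ t'') y).
Proof.
move=> hX hXs ht; elim=> [|k IH] t' hk hi ht'.
all: have hin := allX_cat ht ht'.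
all: case: (classic (forall y, X y -> spn (t ++ t') y)) => hsp.
1,3: exists t'; split => //; split => // y; split; first exact: hsp.
1,2: exact: spn_min hX hin y.
all: have [y [hy hny]] : exists y, X y /\ ~ spn (t ++ t') y
  by apply: NNPP => hn; apply: hsp => y hy; apply: NNPP => hny; apply: hn; exists y.
all: have hi2 := indep_rcons hi hny.
all: have hy1 : forall i, (i < size [:: y])%N -> X [:: y]`_i by case.
all: have hin2 := allX_cat hin hy1.
all: have hst := steinitz hi2 (fun j hj => hXs _ (hin2 j hj)).
- exfalso; move: hst hk; rewrite !size_cat /= leqn0 subn_eq0 addn1 => h1 h2.
  by move: (leq_trans h1 h2); rewrite ltnn.
- apply: (IH (t' ++ [:: y])).
  + move: hk; rewrite catA !size_cat /= addn1 => h.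
    by rewrite subnS; move: h; case: (size s - _)%N.
  + by rewrite catA.
  + exact: allX_cat ht' hy1.
Qed.
Lemma spn_catD s1 s2 u w : spn s1 u -> spn s2 w -> spn (s1 ++ s2) (u + w).
Proof.
move=> [c1 ->] [c2 ->]; exists (fun i => if (i < size s1)%N then c1 i else c2 (i - size s1)%N).
rewrite cmb_cat; congr (_ + _); apply: cmb_eq => i hi; first by rewrite hi.
by rewrite ltnNge leq_addr /= addKn.
Qed.

Lemma extend s X t : is_subspace X -> (forall y, X y -> spn s y) -> indep t ->
  (forall i, (i < size t)%N -> X t`_i) ->
  exists t', indep (t ++ t') /\ (forall i, (i < size t')%N -> X t'`_i) /\
     (forall y, X y <-> spn (t ++ t') y).
Proof.
move=> hX hXs ht htX.
apply: (@extend_aux s X t hX hXs htX (size s) [::]); rewrite ?cats0 ?leq_subr //.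
Qed.

Lemma indep_nil : indep [::].
Proof. by move=> c _ i. Qed.

Lemma hasd_ex s X : is_subspace X -> (forall y, X y -> spn s y) ->
  exists n, hasd X n /\ (n <= size s)%N.
Proof.
move=> hX hXs; have [t' [hi [ht' hsp]]] := extend hX hXs indep_nil (fun i (h : (i < 0)%N) => False_ind _ (notF h)).
exists (size t'); split; first by exists t'.
apply: steinitz => // j hj; apply: hXs; exact: ht'.
Qed.

Lemma sub_ext X Y : (forall v, X v <-> Y v) -> is_subspace Y -> is_subspace X.
Proof.
move=> e [h0 h]; split; first by apply/e.
move=> a u v /e hu /e hv; apply/e; exact: h.
Qed.

Lemma hasd_ext X Y n : (forall v, X v <-> Y v) -> hasd Y n -> hasd X n.
Proof. move=> e [b [h1 [h2 h3]]]; exists b; do 2 split => //; move=> x; by rewrite e. Qed.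

Lemma hasd_sub X n : hasd X n -> is_subspace X.
Proof. move=> [b [_ [_ e]]]; exact: sub_ext e (spn_sub b). Qed.

Lemma hasd_le X Y n m : hasd X n -> hasd Y m -> (forall v, X v -> Y v) -> (n <= m)%N.
Proof.
move=> [bX [<- [iX eX]]] [bY [<- [_ eY]]] hs; apply: steinitz iX _ => j hj.
apply/eY; apply: hs; apply/eX; exact: spn_nth.
Qed.

Lemma hasd_uniq X n m : hasd X n -> hasd X m -> n = m.
Proof. move=> h1 h2; apply/eqP; rewrite eqn_leq (hasd_le h1 h2) ?(hasd_le h2 h1) //. Qed.

Lemma hasd_eq X Y n : hasd X n -> hasd Y n -> (forall v, X v -> Y v) ->
  forall v, Y v -> X v.
Proof.
move=> hXn hYn hs; have [bX [hbX [iX eX]]] := hXn.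
have [bY [hbY [iY eY]]] := hYn.
have hY := hasd_sub hYn.
have inY : forall i, (i < size bX)%N -> Y bX`_i by move=> i hi; apply: hs; apply/eX; exact: spn_nth.
have [t' [hi [ht' hsp]]] := extend hY (fun y hy => proj1 (eY y) hy) iX inY.
have hsz : size (bX ++ t') = n by apply: (hasd_uniq (X:=Y)) hYn; exists (bX ++ t').
have t0 : t' = [::] by apply/eqP; rewrite -size_eq0; move: hsz; rewrite size_cat hbX -{2}(addn0 n) => /addnI ->.
move=> v /hsp; rewrite t0 cats0 => hv; exact/eX.
Qed.

Lemma grass X Y nX nY nI nS : hasd X nX -> hasd Y nY -> hasd (fun v => X v /\ Y v) nI ->
  hasd (fun v => exists x y, X x /\ Y y /\ v = x + y) nS -> (nX + nY <= nS + nI)%N.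
Proof.
move=> hXd hYd hId hSd.
have hX := hasd_sub hXd; have hY := hasd_sub hYd.
have [bX [hbX [iX eX]]] := hXd; have [bI [hbI [iI eI]]] := hId.
have [bS [hbS [iS eS]]] := hSd; have [bY [hbY [iY eY]]] := hYd.
have bIY : forall i, (i < size bI)%N -> Y bI`_i.
  by move=> i hi; have := (proj2 (eI _)) (spn_nth hi); case.
have [y' [hi [hy' hsp]]] := extend hY (fun y hy => proj1 (eY y) hy) iI bIY.
have hsz : size (bI ++ y') = nY by apply: (hasd_uniq (X:=Y)) hYd; exists (bI ++ y').
have hind : indep (bX ++ y').
  apply: indep_cat => //; first exact: indep_catr hi.
  move=> v hvX hvy.
  have vX : X v := proj2 (eX v) hvX.
  have vY : Y v := spn_min hY hy' hvy.
  have hvI : spn bI v := proj1 (eI v) (conj vX vY).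
  exact: indep_disj hi v hvI hvy.
have hX1 : forall i, (i < size bX)%N -> spn bS bX`_i.
  move=> i hi0; apply/eS; exists bX`_i, 0; split; first by apply/eX; exact: spn_nth.
  by split; [exact: sub0 hY | rewrite addr0].
have hy1 : forall i, (i < size y')%N -> spn bS y'`_i.
  move=> i hi0; apply/eS; exists 0, y'`_i; split; first exact: sub0 hX.
  by split; [exact: hy' | rewrite add0r].
have := steinitz hind (allX_cat hX1 hy1).
move: hsz; rewrite !size_cat hbX hbS hbI => <- h.
by rewrite addnCA [(nS + _)%N]addnC leq_add2l.
Qed.

Lemma cmb_map f s c : cmb (map f s) c = \sum_(0 <= i < size s) c i *: f s`_i.
Proof. rewrite /cmb size_map; apply: eq_big_nat => i /andP[_ hi]; by rewrite (nth_map 0). Qed.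

Lemma hasd_rmul X n x : x \is a GRing.unit -> hasd X n ->
  hasd (fun y => exists z, X z /\ y = z * x) n.
Proof.
move=> hx [b [<- [ib eb]]]; exists (map (fun z => z * x) b); split; first by rewrite size_map.
have cm : forall c, cmb (map (fun z => z * x) b) c = cmb b c * x.
  by move=> c; rewrite cmb_map /cmb mulr_suml; apply: eq_bigr => i _; rewrite scalerAl.
split.
  move=> c; rewrite cm size_map => h; apply: ib; by rewrite -(mulrK hx (cmb b c)) h mul0r.
move=> y; split.
  by move=> [z [/eb [c ->] ->]]; exists c; rewrite cm.
by move=> [c ->]; exists (cmb b c); rewrite cm; split => //; apply/eb; exists c.
Qed.

Lemma hasd_lmul X n x : x \is a GRing.unit -> hasd X n ->
  hasd (fun y => exists z, X z /\ y = x * z) n.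
Proof.
move=> hx [b [<- [ib eb]]]; exists (map (fun z => x * z) b); split; first by rewrite size_map.
have cm : forall c, cmb (map (fun z => x * z) b) c = x * cmb b c.
  by move=> c; rewrite cmb_map /cmb mulr_sumr; apply: eq_bigr => i _; rewrite scalerAr.
split.
  move=> c; rewrite cm size_map => h; apply: ib; by rewrite -(mulKr hx (cmb b c)) h mulr0.
move=> y; split.
  by move=> [z [/eb [c ->] ->]]; exists c; rewrite cm.
by move=> [c ->]; exists (cmb b c); rewrite cm; split => //; apply/eb; exists c.
Qed.

Lemma prod_spn A B sA sB : (forall y, A y <-> spn sA y) -> (forall y, B y <-> spn sB y) ->
  forall v, kspan (prodset A B) v -> spn [seq x * y | x <- sA, y <- sB] v.
Proof.
move=> eA eB v; apply: kspan_min; first exact: spn_sub.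
move=> w [a [b [/eA [c ->] [/eB [d ->] ->]]]].
rewrite /cmb mulr_suml big_seq; apply: subsum; first exact: spn_sub.
move=> i; rewrite mem_index_iota => /andP[_ hi].
rewrite mulr_sumr big_seq; apply: subsum; first exact: spn_sub.
move=> j; rewrite mem_index_iota => /andP[_ hj].
rewrite -scalerAl -scalerAr; apply: subZ; first exact: spn_sub.
apply: subZ; first exact: spn_sub.
apply: spn_mem; apply: allpairs_f; exact: mem_nth.
Qed.

Lemma hasd_prod A B a b : hasd A a -> hasd B b -> exists n, hasd (kspan (prodset A B)) n.
Proof.
move=> [sA [_ [_ eA]]] [sB [_ [_ eB]]].
have [n [h _]] := hasd_ex (kspan_sub (prodset A B)) (prod_spn eA eB).
by exists n.
Qed.
End Lin.
Section Main.
Variables (K : fieldType) (L : unitAlgType K).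
Implicit Types (U V X Y : L -> Prop).

Definition Kp U : L -> Prop := fun y => exists (k : K) u, U u /\ y = k%:A + u.
Definition Wset U V : L -> Prop := sum3 U V (kspan (prodset U V)).
Definition Wok U V := forall k : K, Wset U V (k%:A) -> k%:A = 0 :> L.
Definition ssum X Y : L -> Prop := fun v => exists x y, X x /\ Y y /\ v = x + y.
Definition rmul X (x : L) : L -> Prop := fun y => exists z, X z /\ y = z * x.
Definition lmul (x : L) X : L -> Prop := fun y => exists z, X z /\ y = x * z.

Lemma ssum_sub X Y : is_subspace X -> is_subspace Y -> is_subspace (ssum X Y).
Proof.
move=> hX hY; split.
  by exists 0, 0; rewrite addr0; split; [exact: sub0|split; [exact: sub0|]].
move=> a u v [x1 [y1 [h1 [h2 ->]]]] [x2 [y2 [h3 [h4 ->]]]].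
exists (a *: x1 + x2), (a *: y1 + y2); split; first by case: hX => _ H; exact: H.
split; first by case: hY => _ H; exact: H.
by rewrite scalerDr addrACA.
Qed.

Lemma rmul_sub X x : is_subspace X -> is_subspace (rmul X x).
Proof.
move=> hX; split; first by exists 0; rewrite mul0r; split => //; exact: sub0.
move=> a u v [z1 [h1 ->]] [z2 [h2 ->]]; exists (a *: z1 + z2); split.
  by case: hX => _ H; exact: H.
by rewrite mulrDl scalerAl.
Qed.

Lemma lmul_sub X x : is_subspace X -> is_subspace (lmul x X).
Proof.
move=> hX; split; first by exists 0; rewrite mulr0; split => //; exact: sub0.
move=> a u v [z1 [h1 ->]] [z2 [h2 ->]]; exists (a *: z1 + z2); split.
  by case: hX => _ H; exact: H.
by rewrite mulrDr scalerAr.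
Qed.

Lemma prer_sub X Y x : is_subspace X -> is_subspace Y -> is_subspace (fun y => X y /\ Y (y * x)).
Proof.
move=> [hX0 hX] [hY0 hY]; split; first by rewrite mul0r.
move=> a u v [h1 h2] [h3 h4]; split; first exact: hX.
by rewrite mulrDl -scalerAl; exact: hY.
Qed.

Lemma prel_sub X Y x : is_subspace X -> is_subspace Y -> is_subspace (fun y => X y /\ Y (x * y)).
Proof.
move=> [hX0 hX] [hY0 hY]; split; first by rewrite mulr0.
move=> a u v [h1 h2] [h3 h4]; split; first exact: hX.
by rewrite mulrDr -scalerAr; exact: hY.
Qed.

Lemma cap_sub X Y : is_subspace X -> is_subspace Y -> is_subspace (fun y => X y /\ Y y).
Proof.
move=> [hX0 hX] [hY0 hY]; split => //.
move=> a u v [h1 h2] [h3 h4]; split; [exact: hX | exact: hY].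
Qed.

Lemma Kp_sub U : is_subspace U -> is_subspace (Kp U).
Proof.
move=> hU; split; first by exists 0, 0; rewrite scale0r addr0; split => //; exact: sub0.
move=> a u v [k1 [u1 [h1 ->]]] [k2 [u2 [h2 ->]]].
exists (a * k1 + k2), (a *: u1 + u2); split; first by case: hU => _ H; exact: H.
by rewrite scalerDr scalerDl scalerA addrACA.
Qed.

Lemma Kp_K U k : is_subspace U -> Kp U k%:A.
Proof. move=> hU; exists k, 0; rewrite addr0; split => //; exact: sub0. Qed.

Lemma Kp_U U u : is_subspace U -> U u -> Kp U u.
Proof. move=> hU hu; exists 0, u; by rewrite scale0r add0r. Qed.

Lemma Kp_1 U : is_subspace U -> Kp U 1.
Proof. move=> hU; have := Kp_K 1 hU; by rewrite scale1r. Qed.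

Lemma WsetE U V y : Wset U V y <-> ssum (ssum U V) (kspan (prodset U V)) y.
Proof.
split.
  by move=> [x1 [x2 [x3 [h1 [h2 [h3 ->]]]]]]; exists (x1 + x2), x3; split => //; exists x1, x2.
move=> [p [q [[x1 [x2 [h1 [h2 ->]]]] [h3 ->]]]]; by exists x1, x2, q.
Qed.

Lemma W_sub U V : is_subspace U -> is_subspace V -> is_subspace (Wset U V).
Proof.
move=> hU hV; apply: (sub_ext (@WsetE U V)); apply: ssum_sub; last exact: kspan_sub.
exact: ssum_sub.
Qed.

Lemma W_U U V u : is_subspace U -> is_subspace V -> U u -> Wset U V u.
Proof.
move=> hU hV hu; exists u, 0, 0; rewrite !addr0; do !split => //; first exact: sub0.
exact: sub0 (kspan_sub _).
Qed.

Lemma W_V U V v : is_subspace U -> is_subspace V -> V v -> Wset U V v.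
Proof.
move=> hU hV hv; exists 0, v, 0; rewrite addr0 add0r; do !split => //; first exact: sub0.
exact: sub0 (kspan_sub _).
Qed.

Lemma W_UV U V u v : is_subspace U -> is_subspace V -> U u -> V v -> Wset U V (u * v).
Proof.
move=> hU hV hu hv; exists 0, 0, (u * v); rewrite !add0r; do !split => //; try exact: sub0.
by apply: kspan_in; exists u, v.
Qed.

Lemma W_min U V U' V' : is_subspace U -> is_subspace V ->
  (forall y, U' y -> Wset U V y) -> (forall y, V' y -> Wset U V y) ->
  (forall y, prodset U' V' y -> Wset U V y) -> forall y, Wset U' V' y -> Wset U V y.
Proof.
move=> hU hV h1 h2 h3 y [x1 [x2 [x3 [g1 [g2 [g3 ->]]]]]].
have hW := W_sub hU hV.
apply: subD => //; first by apply: subD => //; [exact: h1 | exact: h2].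
exact: kspan_min hW h3 g3.
Qed.

Lemma Wok_mono U V U' V' : Wok U V -> (forall y, Wset U' V' y -> Wset U V y) -> Wok U' V'.
Proof. by move=> h hs k hk; apply: h; apply: hs. Qed.

Lemma WK U V k w : is_subspace U -> is_subspace V -> Wok U V ->
  Wset U V (k%:A + w) -> Wset U V w -> k%:A = 0 :> L.
Proof.
move=> hU hV h h1 h2; apply: h; have := subB (W_sub hU hV) h1 h2; by rewrite addrK.
Qed.

Lemma W1 U V : Wok U V -> ~ Wset U V 1.
Proof. move=> h h1; have := h 1; rewrite scale1r => /(_ h1) /eqP; by rewrite oner_eq0. Qed.

Lemma transT U V x : is_subspace U -> is_subspace V -> Wok U V -> U x -> V x ->
  [/\ is_subspace (ssum U (rmul (Kp U) x)), is_subspace (fun y => V y /\ Kp V (x * y)),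
      Wok (ssum U (rmul (Kp U) x)) (fun y => V y /\ Kp V (x * y)),
      forall y, Kp (ssum U (rmul (Kp U) x)) y <-> ssum (Kp U) (rmul (Kp U) x) y &
      forall y, Kp (fun y => V y /\ Kp V (x * y)) y <-> (Kp V y /\ Kp V (x * y))].
Proof.
move=> hU hV hW hxU hxV.
have hA := Kp_sub hU; have hB := Kp_sub hV; have hWs := W_sub hU hV.
split.
- exact: ssum_sub hU (rmul_sub x hA).
- exact: prel_sub x hV hB.
- apply: (Wok_mono hW); apply: W_min => //.
  + move=> y [p [q [hp [[z [[k [u [hu ->]]] ->]] ->]]]].
    rewrite mulrDl mulr_algl; apply: subD => //; first exact: W_U.
    apply: subD => //; [apply: subZ => //; exact: W_U | exact: W_UV].
  + by move=> y [hy _]; exact: W_V.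
  + move=> y [y1 [y2 [[p [q [hp [[z [[k [u [hu ->]]] ->]] ->]]]] [[hy2 [k' [v' [hv' hxy2]]]] ->]]]].
    have hk' : k'%:A = 0 :> L.
      apply: (WK hU hV hW (w := v')); first by rewrite -hxy2; exact: W_UV.
      exact: W_V.
    rewrite hk' add0r in hxy2.
    rewrite mulrDl -mulrA hxy2 mulrDl mulr_algl; apply: subD => //; first exact: W_UV.
    apply: subD => //; [apply: subZ => //; exact: W_V | exact: W_UV].
- move=> y; split.
    move=> [k [w [[p [q [hp [hq ->]]]] ->]]]; exists (k%:A + p), q; split; first by exists k, p.
    by split => //; rewrite addrA.
  move=> [p [q [[k [u [hu ->]]] [hq ->]]]]; exists k, (u + q); split; first by exists u, q.
  by rewrite addrA.
- move=> y; split.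
    move=> [k [v [[hv hxv] ->]]]; split; first by exists k, v.
    rewrite mulrDr mulr_algr; apply: subD => //; apply: subZ => //; exact: Kp_U.
  move=> [[k [v [hv ->]]] hxy]; exists k, v; split => //; split => //.
  have := subB hB hxy (subZ k hB (Kp_U hV hxV)).
  by rewrite mulrDr mulr_algr [k *: x + _]addrC addrK.
Qed.

Lemma transT' U V x : is_subspace U -> is_subspace V -> Wok U V -> U x -> V x ->
  [/\ is_subspace (fun y => U y /\ Kp U (y * x)), is_subspace (ssum V (lmul x (Kp V))),
      Wok (fun y => U y /\ Kp U (y * x)) (ssum V (lmul x (Kp V))),
      forall y, Kp (fun y => U y /\ Kp U (y * x)) y <-> (Kp U y /\ Kp U (y * x)) &
      forall y, Kp (ssum V (lmul x (Kp V))) y <-> ssum (Kp V) (lmul x (Kp V)) y].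
Proof.
move=> hU hV hW hxU hxV.
have hA := Kp_sub hU; have hB := Kp_sub hV; have hWs := W_sub hU hV.
split.
- exact: prer_sub x hU hA.
- exact: ssum_sub hV (lmul_sub x hB).
- apply: (Wok_mono hW); apply: W_min => //.
  + by move=> y [hy _]; exact: W_U.
  + move=> y [p [q [hp [[z [[k [v [hv ->]]] ->]] ->]]]].
    rewrite mulrDr mulr_algr; apply: subD => //; first exact: W_V.
    apply: subD => //; [apply: subZ => //; exact: W_U | exact: W_UV].
  + move=> y [y1 [y2 [[hy1 [k' [u' [hu' hy1x]]]] [[p [q [hp [[z [[k [v [hv ->]]] ->]] ->]]]] ->]]]].
    have hk' : k'%:A = 0 :> L.
      apply: (WK hU hV hW (w := u')); first by rewrite -hy1x; exact: W_UV.
      exact: W_U.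
    rewrite hk' add0r in hy1x.
    rewrite mulrDr mulrA hy1x mulrDr mulr_algr; apply: subD => //; first exact: W_UV.
    apply: subD => //; [apply: subZ => //; exact: W_U | exact: W_UV].
- move=> y; split.
    move=> [k [u [[hu hux] ->]]]; split; first by exists k, u.
    rewrite mulrDl mulr_algl; apply: subD => //; apply: subZ => //; exact: Kp_U.
  move=> [[k [u [hu ->]]] hyx]; exists k, u; split => //; split => //.
  have := subB hA hyx (subZ k hA (Kp_U hU hxU)).
  by rewrite mulrDl mulr_algl [k *: x + _]addrC addrK.
- move=> y; split.
    move=> [k [w [[p [q [hp [hq ->]]]] ->]]]; exists (k%:A + p), q; split; first by exists k, p.
    by split => //; rewrite addrA.
  move=> [p [q [[k [u [hu ->]]] [hq ->]]]]; exists k, (u + q); split; first by exists u, q.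
  by rewrite addrA.
Qed.

Lemma kspan_mono (P Q : L -> Prop) v : (forall y, P y -> Q y) -> kspan P v -> kspan Q v.
Proof. move=> h [s [c [hs hc]]]; exists s, c; split => // i hi; exact: h (hs i hi). Qed.

Lemma nat_aux1 (d d' s b b' : nat) : (d' <= d)%N -> (b' < b)%N -> (d' * s + b' < d * s + b)%N.
Proof. move=> h1 h2; rewrite -addnS; apply: leq_add => //; exact: leq_mul h1 (leqnn s). Qed.

Lemma nat_aux2 (d d' s b b1 : nat) : (d' < d)%N -> (b1 <= s)%N -> (d' * s.+1 + b1 < d * s.+1 + b)%N.
Proof.
move=> h1 h2; apply: (@leq_trans (d'.+1 * s.+1)).
  by rewrite mulSn addnC ltn_add2r.
apply: leq_trans (leq_addr b _); exact: leq_mul h1 (leqnn _).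
Qed.

Hypothesis divL : forall x : L, x != 0 -> x \is a GRing.unit.

Lemma core (S : L -> Prop) (sS : nat) : hasd S sS ->
  forall m U V a b, ((sS + sS - (a + b)) * sS.+1 + b < m)%N ->
  is_subspace U -> is_subspace V -> Wok U V ->
  hasd (Kp U) a -> hasd (Kp V) b ->
  (forall y, kspan (prodset (Kp U) (Kp V)) y -> S y) ->
  exists n, hasd (kspan (prodset (Kp U) (Kp V))) n /\ (a + b - 1 <= n)%N.
Proof.
move=> hS; elim=> // m IH U V a b hm hU hV hW ha hb hPS.
set A := Kp U; set B := Kp V; set P := kspan (prodset A B).
have hA := Kp_sub hU; have hB := Kp_sub hV; have hP : is_subspace P := kspan_sub _.
have [nP hnP] := hasd_prod ha hb.
exists nP; split => //.
have hPS' : (nP <= sS)%N := hasd_le hnP hS hPS.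
have AP : forall y, A y -> P y.
  by move=> y hy; apply: kspan_in; exists y, 1; rewrite mulr1; do !split => //; exact: Kp_1.
have BP : forall y, B y -> P y.
  by move=> y hy; apply: kspan_in; exists 1, y; rewrite mul1r; do !split => //; exact: Kp_1.
have [bP [hbP [_ eP]]] := hnP.
have dimP : forall Z, is_subspace Z -> (forall y, Z y -> P y) ->
    exists n, hasd Z n /\ (n <= nP)%N.
  move=> Z hZ hZP; rewrite -hbP; apply: hasd_ex hZ _ => y hy; apply/eP; exact: hZP.
have haP : (a <= nP)%N := hasd_le ha hnP AP.
have hbP' : (b <= nP)%N := hasd_le hb hnP BP.
case: (classic (exists x, U x /\ V x /\ x != 0)) => [[x [hxU [hxV hx0]]] | hno]; last first.
  have [v [hvd _]] := dimP V hV (fun y hy => BP y (Kp_U hV hy)).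
  have [bV [hbV [iV eV]]] := hvd. have [bA [hbA [iA eA]]] := ha.
  have [bB [hbB [iB eB]]] := hb.
  have hb1 : (b <= v.+1)%N.
    rewrite -hbB -hbV; have := @steinitz _ _ ([:: 1] ++ bV) bB iB.
    rewrite size_cat /= add1n; apply => j hj.
    have : B bB`_j by apply/eB; exact: spn_nth.
    move=> [k [u [hu ->]]]; apply: (spn_catD (s1:=[:: 1]) (s2:=bV)); first by exists (fun _ => k); rewrite cmb1.
    exact/eV.
  have hind : indep (bA ++ bV).
    apply: indep_cat => // y /eA hyA /eV hyV.
    move: hyA => [k [u [hu ey]]].
    have hk : k%:A = 0 :> L.
      apply: (WK hU hV hW (w := u)); first by rewrite -ey; exact: W_V.
      exact: W_U.
    rewrite hk add0r in ey; rewrite ey in hyV *.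
    apply: NNPP => hn; apply: hno; exists u; do !split => //; exact/eqP.
  have hA1 : forall i, (i < size bA)%N -> spn bP bA`_i.
    move=> i hi; apply/eP; apply: AP; apply/eA; exact: spn_nth.
  have hV1 : forall i, (i < size bV)%N -> spn bP bV`_i.
    move=> i hi; apply/eP; apply: BP; apply: Kp_U => //; apply/eV; exact: spn_nth.
  have := steinitz hind (allX_cat hA1 hV1).
  rewrite size_cat hbA hbV hbP => h; nlia.
have hxu : x \is a GRing.unit := divL hx0.
have hxA : A x := Kp_U hU hxU. have hxB : B x := Kp_U hV hxV.
have hAx : hasd (rmul A x) a := hasd_rmul hxu ha.
have hxBd : hasd (lmul x B) b := hasd_lmul hxu hb.
have [i1 [hi1 _]] := dimP _ (prer_sub x hA hA) (fun y hy => AP y hy.1).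
have [i2 [hi2 _]] := dimP _ (prel_sub x hB hB) (fun y hy => BP y hy.1).
have hAI : hasd (fun y => A y /\ rmul A x y) i1.
  apply: hasd_ext (hasd_rmul hxu hi1) => y; split.
    by move=> [hy [z [hz ey]]]; exists z; split => //; split => //; rewrite -ey.
  by move=> [z [[hz hzx] ->]]; split => //; exists z.
have hBI : hasd (fun y => B y /\ lmul x B y) i2.
  apply: hasd_ext (hasd_lmul hxu hi2) => y; split.
    by move=> [hy [z [hz ey]]]; exists z; split => //; split => //; rewrite -ey.
  by move=> [z [[hz hzx] ->]]; split => //; exists z.
have A1P : forall y, ssum A (rmul A x) y -> P y.
  by move=> y [p [q [hp [[z [hz ->]] ->]]]]; apply: subD => //;
       [exact: AP | apply: kspan_in; exists z, x].
have B1P : forall y, ssum B (lmul x B) y -> P y.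
  by move=> y [p [q [hp [[z [hz ->]] ->]]]]; apply: subD => //;
       [exact: BP | apply: kspan_in; exists x, z].
have [a1 [ha1 ha1P]] := dimP (ssum A (rmul A x)) (ssum_sub hA (rmul_sub x hA)) A1P.
have [b1 [hb1 hb1P]] := dimP (ssum B (lmul x B)) (ssum_sub hB (lmul_sub x hB)) B1P.
have g1 := grass ha hAx hAI ha1.
have g2 := grass hb hxBd hBI hb1.
have hi1a : (i1 <= a)%N := hasd_le hi1 ha (fun y hy => hy.1).
have hi2b : (i2 <= b)%N := hasd_le hi2 hb (fun y hy => hy.1).
have hmm : ((sS + sS - (a + b)) * sS.+1 + b <= m)%N by [].
case: (leqP (b + i1) (a + i2)) => hcase.
- have [sU' sV' wok' eU' eV'] := transT hU hV hW hxU hxV.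
  have ha1' := hasd_ext eU' ha1.
  have hi2' := hasd_ext eV' hi2.
  have hsub : forall y, kspan (prodset (Kp (ssum U (rmul (Kp U) x)))
                  (Kp (fun y => V y /\ Kp V (x * y)))) y -> P y.
    move=> y; apply: (kspan_min hP) => w
      [y1 [y2 [/eU' [p [q [hp [[z [hz ->]] ->]]]] [/eV' [hy2 hxy2] ->]]]].
    rewrite mulrDl -mulrA; apply: (subD hP); apply: kspan_in;
      [by exists p, y2 | by exists z, (x * y2)].
  have hlt : (i2 < b)%N.
    rewrite ltn_neqAle hi2b andbT; apply/eqP => e; rewrite e in hi2.
    have h1 := hasd_eq hi2 hb (fun y hy => hy.1).
    have h2 : forall y, lmul x B y -> B y by move=> y [z [hz ->]]; exact: (h1 z hz).2.
    have h3 := hasd_eq hxBd hb h2.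
    have [z [hz e1]] := h3 1 (Kp_1 hV).
    apply: (W1 hW); rewrite e1; move: hz => [k [v [hv ->]]].
    rewrite mulrDr mulr_algr; apply: subD; first exact: W_sub.
      apply: subZ; [exact: W_sub | exact: W_U].
    exact: W_UV.
  have hN : (a + b <= a1 + i2)%N by nlia.
  have hmeas : ((sS + sS - (a1 + i2)) * sS.+1 + i2 < m)%N.
    apply: leq_trans hmm; apply: nat_aux1 => //; exact: leq_sub2l.
  have [n' [hn' hle]] := IH _ _ a1 i2 hmeas sU' sV' wok' ha1' hi2' (fun y hy => hPS y (hsub y hy)).
  have := hasd_le hn' hnP hsub => hnn; nlia.
  Show.
- have [sU' sV' wok' eU' eV'] := transT' hU hV hW hxU hxV.
  have hi1' := hasd_ext eU' hi1.
  have hb1' := hasd_ext eV' hb1.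
  have hsub : forall y, kspan (prodset (Kp (fun y => U y /\ Kp U (y * x)))
                  (Kp (ssum V (lmul x (Kp V))))) y -> P y.
    move=> y; apply: (kspan_min hP) => w
      [y1 [y2 [/eU' [hy1 hy1x] [/eV' [p [q [hp [[z [hz ->]] ->]]]] ->]]]].
    rewrite mulrDr mulrA; apply: (subD hP); apply: kspan_in;
      [by exists y1, p | by exists (y1 * x), z].
  have hN : (a + b < i1 + b1)%N by nlia.
  have hN2 : (i1 + b1 <= sS + sS)%N by nlia.
  have hmeas : ((sS + sS - (i1 + b1)) * sS.+1 + b1 < m)%N.
    apply: leq_trans hmm; apply: nat_aux2; last by nlia.
    by apply: ltn_sub2l => //; nlia.
  have [n' [hn' hle]] := IH _ _ i1 b1 hmeas sU' sV' wok' hi1' hb1' (fun y hy => hPS y (hsub y hy)).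
  have := hasd_le hn' hnP hsub => hnn; nlia.
Qed.

End Main.

Lemma kspan_ext (K : fieldType) (L : unitAlgType K) (P Q : L -> Prop) v :
  (forall y, P y <-> Q y) -> (kspan P v <-> kspan Q v).
Proof. by move=> e; split; apply: kspan_mono => y /e. Qed.

Theorem mainTheorem9 (K : fieldType) (L : unitAlgType K)
  (divL : forall x : L, x != 0 -> x \is a GRing.unit)
  (A B Abar Bbar : L -> Prop) (a b : nat)
  (subA : is_subspace A) (subB : is_subspace B)
  (dimA : has_dim A a) (dimB : has_dim B b)
  (KA : forall k : K, A (k%:A)) (KB : forall k : K, B (k%:A))
  (subAbar : is_subspace Abar) (subBbar : is_subspace Bbar)
  (decA : dsum_K A Abar) (decB : dsum_K B Bbar)
  (hK : forall k : K,
      sum3 Abar Bbar (kspan (prodset Abar Bbar)) (k%:A) -> k%:A = 0 :> L) :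
  exists n : nat, has_dim (kspan (prodset A B)) n /\ (a + b - 1 <= n)%N.
Proof.
have eA : forall y, Kp Abar y <-> A y by move=> y; rewrite (proj1 decA y).
have eB : forall y, Kp Bbar y <-> B y by move=> y; rewrite (proj1 decB y).
have hA' : hasd (Kp Abar) a by apply: hasd_ext eA _; apply/has_dimE.
have hB' : hasd (Kp Bbar) b by apply: hasd_ext eB _; apply/has_dimE.
have eP : forall v, kspan (prodset A B) v <-> kspan (prodset (Kp Abar) (Kp Bbar)) v.
  move=> v; apply: kspan_ext => y; split.
    by move=> [s1 [s2 [/eA h1 [/eB h2 ->]]]]; exists s1, s2.
  by move=> [s1 [s2 [/eA h1 [/eB h2 ->]]]]; exists s1, s2.
have hW : Wok Abar Bbar := hK.
have [sS hsS] := hasd_prod hA' hB'.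
have [n [hn hle]] := @core K L divL _ _ hsS _ Abar Bbar a b (ltnSn _) subAbar subBbar hW hA' hB' (fun y hy => hy).
exists n; split => //; apply/has_dimE; exact: hasd_ext eP hn.
Qed.
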